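(* Let $p$ be a prime and $G=S^1\times C_p$. There exists a $G$-equivariant continuous map $h:S(V_{1,0}\oplus V_{1,1})\to S(V_{p,0}\oplus V_{0,1})$.
   Context: Let $a$ be a generator of $C_p$ and $\xi_p=e^{2\pi\sqrt{-1}/p}$. For $k\in\mathbb{Z}$ and $l\in\mathbb{Z}/p$, $V_{k,l}$ is the $1$-dimensional unitary $G$-representation on $\mathbb{C}$ with $(t,a^j)\cdot z=t^k\xi_p^{jl}z$ for $t\in S^1$. $S(\cdot)$ denotes the unit sphere. *)

(* Defs.v *)
From Stdlib Require Import Reals ZArith Znumtheory.
From Coquelicot Require Import Coquelicot.
Open Scope R_scope.

Fixpoint Cpown (z : C) (n : nat) : C :=
  match n with O => 1%C | S m => (z * Cpown z m)%C end.

Definition xi (p : nat) : C := (cos (2 * PI / INR p), sin (2 * PI / INR p)).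

(* G = S^1 x C_p; an element (t, a^j) is given by t : C with |t| = 1 and j : nat.
   Action on V_{k,l}:  (t, a^j) . z = t^k xi_p^{j l} z. *)
Definition actV (p k l : nat) (t : C) (j : nat) (z : C) : C :=
  (Cpown t k * Cpown (xi p) (j * l) * z)%C.

Definition actV2 (p k1 l1 k2 l2 : nat) (t : C) (j : nat) (x : C * C) : C * C :=
  (actV p k1 l1 t j (fst x), actV p k2 l2 t j (snd x)).

Definition in_sphere (x : C * C) : Prop :=
  Cmod (fst x) ^ 2 + Cmod (snd x) ^ 2 = 1.

Definition continuous_on_sphere (h : C * C -> C * C) : Prop :=
  forall x, in_sphere x -> forall eps, 0 < eps -> exists delta, 0 < delta /\
    forall y, in_sphere y ->
      Cmod (fst y - fst x) < delta -> Cmod (snd y - snd x) < delta ->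
      Cmod (fst (h y) - fst (h x)) < eps /\ Cmod (snd (h y) - snd (h x)) < eps.

(* Main.v *)
Require Import Defs.
From Stdlib Require Import Reals ZArith Znumtheory Lra Psatz.
From Coquelicot Require Import Coquelicot.
Open Scope R_scope.

Lemma Cpown_Cpow z n : Cpown z n = Cpow z n.
Proof. induction n; simpl; congruence. Qed.

Lemma cont_C {U : UniformSpace} (f : U -> C) x :
  continuous (fun y => fst (f y)) x -> continuous (fun y => snd (f y)) x ->
  @continuous U C_UniformSpace f x.
Proof.
  intros H1 H2. unfold continuous. apply filterlim_locally. intros eps.
  apply (proj1 (filterlim_locally _ _)) with (eps := eps) in H1.
  apply (proj1 (filterlim_locally _ _)) with (eps := eps) in H2.
  generalize (filter_and _ _ H1 H2). apply filter_imp.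
  intros y [A B]. split; assumption.
Qed.

Lemma cont_fstC {U : UniformSpace} (f : U -> C) x :
  @continuous U C_UniformSpace f x -> continuous (fun y => fst (f y)) x.
Proof.
  intros H. apply (continuous_comp f (fun c : C_UniformSpace => fst c)); auto.
  destruct (f x). apply (continuous_fst (U:=R_UniformSpace) (V:=R_UniformSpace)).
Qed.

Lemma cont_sndC {U : UniformSpace} (f : U -> C) x :
  @continuous U C_UniformSpace f x -> continuous (fun y => snd (f y)) x.
Proof.
  intros H. apply (continuous_comp f (fun c : C_UniformSpace => snd c)); auto.
  destruct (f x). apply (continuous_snd (U:=R_UniformSpace) (V:=R_UniformSpace)).
Qed.


Lemma cR_mult {U : UniformSpace} (f g : U -> R) x :
  continuous f x -> continuous g x -> continuous (fun y => f y * g y) x.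
Proof. intros H H0. exact (continuous_mult (K := R_AbsRing) f g x H H0). Qed.

Lemma cR_plus {U : UniformSpace} (f g : U -> R) x :
  continuous f x -> continuous g x -> continuous (fun y => f y + g y) x.
Proof. intros H H0. exact (continuous_plus (K := R_AbsRing) (V:=R_NormedModule) f g x H H0). Qed.

Lemma cR_opp {U : UniformSpace} (f : U -> R) x :
  continuous f x -> continuous (fun y => - f y) x.
Proof. intros H. exact (continuous_opp (K := R_AbsRing) (V:=R_NormedModule) f x H). Qed.

Lemma cont_Cmult {U : UniformSpace} (f g : U -> C) x :
  @continuous U C_UniformSpace f x -> @continuous U C_UniformSpace g x ->
  @continuous U C_UniformSpace (fun y => Cmult (f y) (g y)) x.
Proof.
  intros H H0. apply cont_C.
  - apply continuous_ext with (f := fun y => fst (f y) * fst (g y) + - (snd (f y) * snd (g y))).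
    + intros y. destruct (f y), (g y). simpl. ring.
    + apply cR_plus; [|apply cR_opp]; apply cR_mult;
      (apply cont_fstC || apply cont_sndC); auto.
  - apply continuous_ext with (f := fun y => fst (f y) * snd (g y) + snd (f y) * fst (g y)).
    + intros y. destruct (f y), (g y). simpl. ring.
    + apply cR_plus; apply cR_mult;
      (apply cont_fstC || apply cont_sndC); auto.
Qed.

Lemma cont_Cplus {U : UniformSpace} (f g : U -> C) x :
  @continuous U C_UniformSpace f x -> @continuous U C_UniformSpace g x ->
  @continuous U C_UniformSpace (fun y => Cplus (f y) (g y)) x.
Proof.
  intros H H0. apply cont_C.
  - apply continuous_ext with (f := fun y => fst (f y) + fst (g y)).
    + intros y. destruct (f y), (g y). simpl. ring.
    + apply cR_plus; apply cont_fstC; auto.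
  - apply continuous_ext with (f := fun y => snd (f y) + snd (g y)).
    + intros y. destruct (f y), (g y). simpl. ring.
    + apply cR_plus; apply cont_sndC; auto.
Qed.

Lemma cont_Cconj {U : UniformSpace} (f : U -> C) x :
  @continuous U C_UniformSpace f x ->
  @continuous U C_UniformSpace (fun y => Cconj (f y)) x.
Proof.
  intros H. apply cont_C.
  - apply continuous_ext with (f := fun y => fst (f y)).
    + intros y. destruct (f y). reflexivity.
    + apply cont_fstC; auto.
  - apply continuous_ext with (f := fun y => - snd (f y)).
    + intros y. destruct (f y). reflexivity.
    + apply cR_opp; apply cont_sndC; auto.
Qed.

Lemma cont_Cconst {U : UniformSpace} (c : C) x :
  @continuous U C_UniformSpace (fun _ => c) x.
Proof. apply continuous_const. Qed.

Lemma cont_Cpow {U : UniformSpace} (f : U -> C) x n :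
  @continuous U C_UniformSpace f x ->
  @continuous U C_UniformSpace (fun y => Cpow (f y) n) x.
Proof.
  intros H. induction n; simpl.
  - apply cont_Cconst.
  - apply cont_Cmult; auto.
Qed.

Lemma cont_RtoC {U : UniformSpace} (f : U -> R) x :
  continuous f x -> @continuous U C_UniformSpace (fun y => RtoC (f y)) x.
Proof.
  intros H. apply cont_C; simpl; auto. apply continuous_const.
Qed.

Lemma cont_Cmod2 {U : UniformSpace} (f : U -> C) x :
  @continuous U C_UniformSpace f x -> continuous (fun y => Cmod (f y) ^ 2) x.
Proof.
  intros H. apply continuous_ext with (f := fun y => fst (f y) * fst (f y) + snd (f y) * snd (f y)).
  - intros y. unfold Cmod. rewrite pow2_sqrt. destruct (f y); simpl; ring.
    destruct (f y); simpl. nra.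
  - apply cR_plus; apply cR_mult; (apply cont_fstC || apply cont_sndC); auto.
Qed.

Definition CC := prod_UniformSpace C_UniformSpace C_UniformSpace.

Definition g1 (p : nat) (x : C * C) : C := (Cpow (fst x) p + Cpow (snd x) p)%C.
Definition g2 (x : C * C) : C := (snd x * Cconj (fst x))%C.
Definition S (p : nat) (x : C * C) : R := Cmod (g1 p x) ^ 2 + Cmod (g2 x) ^ 2.
Definition hh (p : nat) (x : C * C) : C * C :=
  (RtoC (/ sqrt (S p x)) * g1 p x, RtoC (/ sqrt (S p x)) * g2 x)%C.

Lemma cont_fst' (x : CC) : @continuous CC C_UniformSpace (fun y => fst y) x.
Proof. destruct x as [a b]. apply (continuous_fst (U:=C_UniformSpace) (V:=C_UniformSpace)). Qed.
Lemma cont_snd' (x : CC) : @continuous CC C_UniformSpace (fun y => snd y) x.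
Proof. destruct x as [a b]. apply (continuous_snd (U:=C_UniformSpace) (V:=C_UniformSpace)). Qed.

Lemma cont_hh p (x : CC) : 0 < S p x -> @continuous CC CC (hh p) x.
Proof.
  intros Hs.
  assert (Hg1 : @continuous CC C_UniformSpace (g1 p) x).
  { unfold g1. apply cont_Cplus; apply cont_Cpow; [apply cont_fst'|apply cont_snd']. }
  assert (Hg2 : @continuous CC C_UniformSpace g2 x).
  { unfold g2. apply cont_Cmult; [apply cont_snd'|apply cont_Cconj; apply cont_fst']. }
  assert (HN : continuous (fun y => / sqrt (S p y)) x).
  { apply (continuous_comp (fun y => sqrt (S p y)) (fun r : R_UniformSpace => / r)).
    - apply (continuous_comp (S p) (fun r : R_UniformSpace => sqrt r)).
      + unfold S. apply cR_plus; apply cont_Cmod2; auto.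
      + apply continuous_sqrt.
    - apply continuous_Rinv. apply Rgt_not_eq. apply sqrt_lt_R0. auto. }
  unfold hh.
  assert (A1 : @continuous CC C_UniformSpace (fun y => (RtoC (/ sqrt (S p y)) * g1 p y)%C) x).
  { apply cont_Cmult; auto. apply cont_RtoC; auto. }
  assert (A2 : @continuous CC C_UniformSpace (fun y => (RtoC (/ sqrt (S p y)) * g2 y)%C) x).
  { apply cont_Cmult; auto. apply cont_RtoC; auto. }
  unfold continuous. apply filterlim_locally. intros eps.
  apply (proj1 (filterlim_locally _ _)) with (eps := eps) in A1.
  apply (proj1 (filterlim_locally _ _)) with (eps := eps) in A2.
  generalize (filter_and _ _ A1 A2). apply filter_imp.
  intros y [B C]. split; assumption.
Qed.

Lemma ball_C_of_Cmod (a b : C) (d : posreal) : Cmod (b - a) < d -> @ball C_UniformSpace a d b.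
Proof.
  intros H. generalize (Rmax_Cmod (b - a)%C). destruct a as [a1 a2], b as [b1 b2].
  simpl. intros Hm. split; unfold ball; simpl; unfold AbsRing_ball, abs, minus, plus, opp; simpl.
  - apply Rle_lt_trans with (2 := H). eapply Rle_trans; [|apply Hm]. apply Rmax_l.
  - apply Rle_lt_trans with (2 := H). eapply Rle_trans; [|apply Hm]. apply Rmax_r.
Qed.

Lemma Cmod_of_ball (a b : C) (d : posreal) : @ball C_UniformSpace a d b -> Cmod (b - a) < sqrt 2 * d.
Proof. intros H. exact (C_NormedModule_mixin_compat2 a b d H). Qed.

Lemma sqrt2_lt2 : sqrt 2 < 2.
Proof.
  rewrite <- (sqrt_pow2 2) at 2 by lra. apply sqrt_lt_1; lra.
Qed.

Lemma cont_to_sphere (f : C * C -> C * C) :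
  (forall x, in_sphere x -> @continuous CC CC f x) -> continuous_on_sphere f.
Proof.
  intros Hc x Hx eps Heps.
  assert (He2 : 0 < eps / 2) by lra.
  specialize (Hc x Hx). unfold continuous in Hc.
  apply (proj1 (filterlim_locally _ _)) with (eps := mkposreal _ He2) in Hc.
  destruct Hc as [d Hd].
  exists d. split; [apply cond_pos|].
  intros y Hy H1 H2.
  assert (B : @ball CC x d y).
  { split; apply ball_C_of_Cmod; auto. }
  destruct (Hd y B) as [C1 C2].
  apply Cmod_of_ball in C1. apply Cmod_of_ball in C2. simpl in C1, C2.
  generalize sqrt2_lt2; intros.
  split; nra.
Qed.

Lemma Cmod_xi p : Cmod (xi p) = 1.
Proof.
  unfold Cmod, xi; simpl. replace (_ + _) with 1 by (generalize (sin2_cos2 (2 * PI / INR p)); unfold Rsqr; intros; lra). apply sqrt_1.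
Qed.

Lemma xi_pow p n : Cpow (xi p) n = (cos (INR n * (2 * PI / INR p)), sin (INR n * (2 * PI / INR p))).
Proof.
  induction n.
  - simpl. rewrite Rmult_0_l, cos_0, sin_0. reflexivity.
  - rewrite Cpow_S, IHn. rewrite S_INR.
    replace ((INR n + 1) * (2 * PI / INR p)) with (2 * PI / INR p + INR n * (2 * PI / INR p)) by ring.
    rewrite cos_plus, sin_plus. unfold xi, Cmult; simpl. f_equal; ring.
Qed.

Lemma xi_p p : (0 < p)%nat -> Cpow (xi p) p = 1%C.
Proof.
  intros Hp. rewrite xi_pow.
  replace (INR p * (2 * PI / INR p)) with (2 * PI).
  - rewrite cos_2PI, sin_2PI. reflexivity.
  - field. apply not_0_INR. lia.
Qed.

Lemma pz (x : R) (n : nat) : (0 < n)%nat -> x ^ n = 0 -> x = 0.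
Proof. intros _ H. destruct (Req_dec x 0); auto. exfalso. exact (pow_nonzero x n H0 H). Qed.

Lemma S_pos p x : (0 < p)%nat -> in_sphere x -> 0 < S p x.
Proof.
  intros Hp Hx. unfold S.
  destruct x as [z1 z2]. unfold in_sphere in Hx; simpl in Hx.
  assert (H1 := pow2_ge_0 (Cmod (g1 p (z1, z2)))).
  assert (H2 := pow2_ge_0 (Cmod (g2 (z1, z2)))).
  destruct (Rle_lt_or_eq_dec _ _ H1) as [|E1]; [lra|].
  destruct (Rle_lt_or_eq_dec _ _ H2) as [|E2]; [lra|].
  exfalso.
  symmetry in E1, E2. apply pz in E1; [|lia]. apply pz in E2; [|lia].
  apply Cmod_eq_0 in E1.
  unfold g2 in E2; simpl in E2. rewrite Cmod_mult, Cmod_conj in E2.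
  unfold g1 in E1; simpl in E1.
  apply Rmult_integral in E2. destruct E2 as [E|E].
  - apply Cmod_eq_0 in E. subst z2.
    assert (Cpow z1 p = 0%C).
    { assert (Z0 : Cpow 0%C p = 0%C) by (destruct p; [lia|]; simpl; ring).
      rewrite Z0, Cplus_0_r in E1. exact E1. }
    apply (f_equal Cmod) in H. rewrite Cmod_pow, Cmod_0 in H.
    apply pz in H; [|lia]. rewrite Cmod_0 in Hx. rewrite H in Hx. simpl in Hx. lra.
  - apply Cmod_eq_0 in E. subst z1.
    assert (Cpow z2 p = 0%C).
    { assert (Z0 : Cpow 0%C p = 0%C) by (destruct p; [lia|]; simpl; ring).
      rewrite Z0, Cplus_0_l in E1. exact E1. }
    apply (f_equal Cmod) in H. rewrite Cmod_pow, Cmod_0 in H.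
    apply pz in H; [|lia]. rewrite Cmod_0 in Hx. rewrite H in Hx. simpl in Hx. lra.
Qed.

Lemma hh_sphere p x : (0 < p)%nat -> in_sphere x -> in_sphere (hh p x).
Proof.
  intros Hp Hx. assert (Hs := S_pos p x Hp Hx).
  unfold in_sphere, hh; simpl. rewrite !Cmod_mult, !Cmod_R.
  assert (Hq : 0 < sqrt (S p x)) by (apply sqrt_lt_R0; auto).
  rewrite Rabs_pos_eq by (left; apply Rinv_0_lt_compat; auto).
  assert (E : sqrt (S p x) ^ 2 = S p x) by (apply pow2_sqrt; lra).
  unfold S in E, Hs |- *.
  set (a := Cmod (g1 p x)) in *. set (b := Cmod (g2 x)) in *.
  set (q := sqrt (a ^ 2 + b ^ 2)) in *.
  assert (Hq2 : 0 < q) by (unfold q; apply sqrt_lt_R0; lra). transitivity ((a ^ 2 + b ^ 2) / q ^ 2); [field; lra|]. rewrite E. field. lra.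
Qed.

Lemma hh_equiv p t j x : (0 < p)%nat -> Cmod t = 1 ->
  hh p (actV2 p 1 0 1 1 t j x) = actV2 p p 0 0 1 t j (hh p x).
Proof.
  intros Hp Ht. destruct x as [z1 z2].
  set (w := Cpow (xi p) j).
  assert (Hw : Cpow w p = 1%C).
  { unfold w. rewrite <- Cpow_mult_r, Nat.mul_comm, Cpow_mult_r, xi_p by auto. apply Cpow_1_l. }
  assert (Hwm : Cmod w = 1) by (unfold w; rewrite Cmod_pow, Cmod_xi; apply pow1).
  assert (Htt : (Cconj t * t = 1)%C).
  { rewrite Cmult_comm, <- Cmod2_conj, Ht. simpl. unfold RtoC. f_equal; ring. }
  assert (C1 : Cconj 1 = 1%C) by (unfold Cconj; simpl; unfold RtoC; f_equal; ring).
  assert (Y : actV2 p 1 0 1 1 t j (z1, z2) = ((t * z1)%C, (t * w * z2)%C)).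
  { unfold actV2, actV; simpl fst; simpl snd. repeat rewrite Cpown_Cpow; rewrite Nat.mul_0_r, Nat.mul_1_r.
    unfold w. simpl. rewrite Cpown_Cpow. f_equal; ring. }
  rewrite Y.
  assert (G1 : g1 p ((t * z1)%C, (t * w * z2)%C) = (Cpow t p * g1 p (z1, z2))%C).
  { unfold g1; simpl fst; simpl snd. rewrite !Cpow_mult_l, Hw. ring. }
  assert (G2 : g2 ((t * z1)%C, (t * w * z2)%C) = (w * g2 (z1, z2))%C).
  { unfold g2; simpl fst; simpl snd. rewrite !Cmult_conj.
    transitivity (w * (z2 * Cconj z1) * (Cconj t * t))%C; [ring|].
    rewrite Htt. ring. }
  assert (SS : S p ((t * z1)%C, (t * w * z2)%C) = S p (z1, z2)).
  { unfold S. rewrite G1, G2, !Cmod_mult, Cmod_pow, Ht, Hwm, pow1, !Rmult_1_l. reflexivity. }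
  unfold hh. rewrite G1, G2, SS.
  unfold actV2, actV; simpl fst; simpl snd. repeat rewrite Cpown_Cpow; rewrite Nat.mul_0_r, Nat.mul_1_r.
  fold w. simpl (Cpow _ 0).
  rewrite (Cpown_Cpow t p), (Cpown_Cpow t 0), (Cpown_Cpow (xi p) 0), (Cpown_Cpow (xi p) j). fold w. simpl (Cpow _ 0). f_equal; ring.
Qed.

Theorem lemma4p2 (p : nat) (hp : prime (Z.of_nat p)) :
  exists h : C * C -> C * C,
    (forall x, in_sphere x -> in_sphere (h x)) /\
    continuous_on_sphere h /\
    (forall (t : C) (j : nat) (x : C * C), Cmod t = 1 -> in_sphere x ->
       h (actV2 p 1 0 1 1 t j x) = actV2 p p 0 0 1 t j (h x)).
Proof.
  assert (Hp : (0 < p)%nat).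
  { destruct hp as [H _]. lia. }
  exists (hh p). split; [|split].
  - intros x Hx. apply hh_sphere; auto.
  - apply cont_to_sphere. intros x Hx. apply cont_hh. apply S_pos; auto.
  - intros t j x Ht Hx. apply hh_equiv; auto.
Qed.
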